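(* Let $K=\mathbb{F}_3$ and $S$ a smooth cubic surface over $K$. Suppose $S$ contains a skew pair of $K$-lines $\ell_1,\ell_2$ such that neither $\ell_1$ nor $\ell_2$ contains a $K$-rational Eckardt point. Then $\mathrm{Span}(\ell_1(K)\cup\ell_2(K))=S(K)$.
   Context: A smooth cubic surface $S$ over $K$ is a nonsingular surface in $\mathbb{P}^3$ defined by a homogeneous cubic over $K$. A $K$-line is a line in $\mathbb{P}^3$ defined over $K$; lines ''on $S$'' are lines over $\overline{K}$ contained in $S$. A skew pair of lines is a pair of disjoint lines. An Eckardt point is a point of $S$ through which three of the lines on $S$ pass. For a line $\ell\not\subset S$, $\ell\cdot S=P+Q+R$ with multiplicity. For $B\subseteq S(K)$ define $B_0=B$ and $B_{n+1}$ as the set of $R\in S(K)$ such that either $R\in B_n$ or there exist $P,Q\in B_n$ and a $K$-line $\ell\not\subset S$ with $\ell\cdot S=P+Q+R$; $\mathrm{Span}(B)=\bigcup_n B_n$. *)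

(* Defs.v *)
From HB Require Import structures.
From mathcomp Require Import all_boot all_order all_algebra all_field.
Set Implicit Arguments. Unset Strict Implicit. Unset Printing Implicit Defensive.
Import Order.TTheory GRing.Theory Num.Theory.
Local Open Scope ring_scope.

Notation K := 'F_3.

Definition Kbar_pack := countable_algebraic_closure K.
Definition Kbar : countClosedFieldType := projT1 Kbar_pack.
Definition Kemb : {rmorphism K -> Kbar} := sval (projT2 Kbar_pack).

(* A homogeneous cubic form in x_0..x_3 with coefficients in R, given by a
   coefficient tensor: F(x) = sum_{i,j,k} c i j k x_i x_j x_k.
   (Every cubic form arises this way.) *)
Definition cubic (R : Type) := 'I_4 -> 'I_4 -> 'I_4 -> R.

Definition cubic_map (R S : Type) (f : R -> S) (c : cubic R) : cubic S :=
  fun i j k => f (c i j k).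

Definition ev (R : comNzRingType) (c : cubic R) (x : 'rV[R]_4) : R :=
  \sum_(i < 4) \sum_(j < 4) \sum_(k < 4) c i j k * x 0 i * x 0 j * x 0 k.

Definition dev (R : comNzRingType) (c : cubic R) (l : 'I_4) (x : 'rV[R]_4) : R :=
  \sum_(i < 4) \sum_(j < 4) \sum_(k < 4)
     c i j k * ((i == l)%:R * x 0 j * x 0 k + (j == l)%:R * x 0 i * x 0 k
                + (k == l)%:R * x 0 i * x 0 j).

Definition cbar (c : cubic K) : cubic Kbar := cubic_map Kemb c.

Definition smooth_cubic (c : cubic K) : Prop :=
  forall x : 'rV[Kbar]_4, x != 0 ->
    ~ (ev (cbar c) x = 0 /\ forall l : 'I_4, dev (cbar c) l x = 0).

(* Points of S(K): nonzero vectors of K^4 (points of P^3(K), up to scalars)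
   on which F vanishes. *)
Definition onS (c : cubic K) (x : 'rV[K]_4) : Prop := x != 0 /\ ev c x = 0.

(* Lines of P^3(Kbar): 2-dimensional row spaces of 2x4 matrices of rank 2. *)
Definition is_line (F : fieldType) (A : 'M[F]_(2, 4)) : Prop := \rank A = 2%N.

Definition line_on_S (c : cubic K) (A : 'M[Kbar]_(2, 4)) : Prop :=
  forall x : 'rV[Kbar]_4, (x <= A)%MS -> ev (cbar c) x = 0.

Definition eckardt (c : cubic K) (P : 'rV[K]_4) : Prop :=
  onS c P /\
  exists A1 A2 A3 : 'M[Kbar]_(2, 4),
    [/\ [/\ is_line A1, is_line A2 & is_line A3],
        [/\ line_on_S c A1, line_on_S c A2 & line_on_S c A3],
        [/\ (map_mx Kemb P <= A1)%MS, (map_mx Kemb P <= A2)%MS & (map_mx Kemb P <= A3)%MS] &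
        [/\ ~~ (A1 == A2)%MS, ~~ (A1 == A3)%MS & ~~ (A2 == A3)%MS]].

Definition Kpoint_of (A : 'M[K]_(2, 4)) (x : 'rV[K]_4) : Prop :=
  x != 0 /\ (x <= A)%MS.

(* S = P + Q + R for a K-line l (spanned by the rows u, v of A) not
   contained in S: restricting F to l, F(s u + t v) factors, as a binary cubic
   form over Kbar, as lambda * L_P * L_Q * L_R where L_X(s,t) = b s - a t is
   the linear form vanishing at the point X = a u + b v. *)
Definition third_point (c : cubic K) (P Q R : 'rV[K]_4) : Prop :=
  exists A : 'M[K]_(2, 4),
    is_line A /\ ~ line_on_S c (map_mx Kemb A) /\
    exists (aP bP aQ bQ aR bR : K) (lam : Kbar),
      [/\ P = aP *: row 0 A + bP *: row 1 A,
          Q = aQ *: row 0 A + bQ *: row 1 A,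
          R = aR *: row 0 A + bR *: row 1 A,
          lam != 0 &
          forall s t : Kbar,
            ev (cbar c) (s *: map_mx Kemb (row 0 A) + t *: map_mx Kemb (row 1 A))
            = lam * (Kemb bP * s - Kemb aP * t) * (Kemb bQ * s - Kemb aQ * t)
                  * (Kemb bR * s - Kemb aR * t)].

Fixpoint Bn (c : cubic K) (B : 'rV[K]_4 -> Prop) (n : nat) : 'rV[K]_4 -> Prop :=
  match n with
  | 0%N => B
  | n'.+1 => fun R => onS c R /\
      (Bn c B n' R \/
       exists P Q, Bn c B n' P /\ Bn c B n' Q /\ third_point c P Q R)
  end.

Definition Span (c : cubic K) (B : 'rV[K]_4 -> Prop) (x : 'rV[K]_4) : Prop :=
  exists n, Bn c B n x.

Definition skew_lines (A B : 'M[Kbar]_(2, 4)) : Prop :=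
  (A :&: B == (0 : 'M[Kbar]_(2, 4)))%MS.

Definition bcK (m n : nat) (A : 'M[K]_(m, n)) : 'M[Kbar]_(m, n) := map_mx Kemb A.

(* Main.v *)
Require Import Defs.
From HB Require Import structures.
From mathcomp Require Import all_boot all_order all_algebra all_field.
From mathcomp Require Import ring.
Import GRing.Theory.
Local Open Scope ring_scope.
Set Implicit Arguments. Unset Strict Implicit.

Section Alg.
Variable R : comNzRingType.
Implicit Types (c : cubic R) (x y z u v w : 'rV[R]_4).

Definition T c x y z : R :=
  \sum_(i < 4) \sum_(j < 4) \sum_(k < 4) c i j k * x 0 i * y 0 j * z 0 k.
Definition D c x w : R := T c w x x + T c x w x + T c x x w.
Definition E c x y z : R :=
  T c x y z + T c x z y + T c y x z + T c y z x + T c z x y + T c z y x.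

Lemma evT c x : ev c x = T c x x x. Proof. by []. Qed.

Lemma addZ1 x y : x + y = 1 *: x + 1 *: y. Proof. by rewrite !scale1r. Qed.
Lemma T1 c a b x x' y z : T c (a *: x + b *: x') y z = a * T c x y z + b * T c x' y z.
Proof.
rewrite /T !mulr_sumr -big_split; apply: eq_bigr => i _.
rewrite !mulr_sumr -big_split; apply: eq_bigr => j _.
rewrite !mulr_sumr -big_split; apply: eq_bigr => k _.
rewrite !mxE /=; ring.
Qed.
Lemma T2 c a b x x' y z : T c y (a *: x + b *: x') z = a * T c y x z + b * T c y x' z.
Proof.
rewrite /T !mulr_sumr -big_split; apply: eq_bigr => i _.
rewrite !mulr_sumr -big_split; apply: eq_bigr => j _.
rewrite !mulr_sumr -big_split; apply: eq_bigr => k _.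
rewrite !mxE /=; ring.
Qed.
Lemma T3 c a b x x' y z : T c y z (a *: x + b *: x') = a * T c y z x + b * T c y z x'.
Proof.
rewrite /T !mulr_sumr -big_split; apply: eq_bigr => i _.
rewrite !mulr_sumr -big_split; apply: eq_bigr => j _.
rewrite !mulr_sumr -big_split; apply: eq_bigr => k _.
rewrite !mxE /=; ring.
Qed.

Lemma TD1 c x x' y z : T c (x + x') y z = T c x y z + T c x' y z.
Proof. by rewrite (addZ1 x) T1 !mul1r. Qed.
Lemma TD2 c x x' y z : T c y (x + x') z = T c y x z + T c y x' z.
Proof. by rewrite (addZ1 x) T2 !mul1r. Qed.
Lemma TD3 c x x' y z : T c y z (x + x') = T c y z x + T c y z x'.
Proof. by rewrite (addZ1 x) T3 !mul1r. Qed.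
Lemma TZ1 c a x y z : T c (a *: x) y z = a * T c x y z.
Proof. by rewrite -[a *: x]addr0 -(scale0r 0) T1 mul0r addr0. Qed.
Lemma TZ2 c a x y z : T c y (a *: x) z = a * T c y x z.
Proof. by rewrite -[a *: x]addr0 -(scale0r 0) T2 mul0r addr0. Qed.
Lemma TZ3 c a x y z : T c y z (a *: x) = a * T c y z x.
Proof. by rewrite -[a *: x]addr0 -(scale0r 0) T3 mul0r addr0. Qed.

Lemma ev2 c s t x y : ev c (s *: x + t *: y) =
  s^+3 * ev c x + s^+2 * t * D c x y + s * t^+2 * D c y x + t^+3 * ev c y.
Proof. rewrite /D !evT !(TD1,TD2,TD3,TZ1,TZ2,TZ3); ring. Qed.


Lemma ev3 c s1 s2 s3 x1 x2 x3 : ev c (s1 *: x1 + s2 *: x2 + s3 *: x3) =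
  s1^+3 * ev c x1 + s2^+3 * ev c x2 + s3^+3 * ev c x3
  + s1^+2 * s2 * D c x1 x2 + s1 * s2^+2 * D c x2 x1
  + s1^+2 * s3 * D c x1 x3 + s1 * s3^+2 * D c x3 x1
  + s2^+2 * s3 * D c x2 x3 + s2 * s3^+2 * D c x3 x2
  + s1 * s2 * s3 * E c x1 x2 x3.
Proof.
rewrite /D /E !evT !(TD1,TD2,TD3,TZ1,TZ2,TZ3); ring.
Qed.
End Alg.

Section Alg2.
Variable R : comNzRingType.
Implicit Types (c : cubic R) (x y z u v w : 'rV[R]_4).
Lemma DD2 c y u v : D c y (u + v) = D c y u + D c y v.
Proof. rewrite /D !(TD1,TD2,TD3); ring. Qed.
Lemma DZ2 c y a u : D c y (a *: u) = a * D c y u.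
Proof. rewrite /D !(TZ1,TZ2,TZ3); ring. Qed.
Lemma Dq c s t x y w : D c (s *: x + t *: y) w =
  s^+2 * D c x w + s * t * E c x y w + t^+2 * D c y w.
Proof. rewrite /D /E !(TD1,TD2,TD3,TZ1,TZ2,TZ3); ring. Qed.
Lemma Dxx c x : D c x x = ev c x + ev c x + ev c x.
Proof. by rewrite /D evT. Qed.
Lemma Exyx c x y : E c x y x = D c x y + D c x y.
Proof. rewrite /D /E; ring. Qed.
Lemma Exyy c x y : E c x y y = D c y x + D c y x.
Proof. rewrite /D /E; ring. Qed.
Lemma Exxy c x y : E c x x y = D c x y + D c x y.
Proof. rewrite /D /E; ring. Qed.
Lemma E23 c x y z : E c x y z = E c x z y.
Proof. rewrite /E; ring. Qed.
Lemma E12 c x y z : E c x y z = E c y x z.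
Proof. rewrite /E; ring. Qed.

Lemma plane c p p' q : ev c p = 0 -> ev c p' = 0 -> ev c q = 0 ->
  D c p p' = 0 -> D c p' p = 0 -> D c p q = 0 -> D c q p = 0 ->
  forall s s' t, ev c (s *: p + s' *: p' + t *: q) =
    s' * t * (E c p p' q * s + D c p' q * s' + D c q p' * t).
Proof.
move=> h1 h2 h3 h4 h5 h6 h7 s s' t; rewrite ev3 h1 h2 h3 h4 h5 h6 h7; ring.
Qed.

Lemma D_delta c y l : D c y (delta_mx 0 l) = dev c l y.
Proof.
rewrite /D /T /dev -!big_split; apply: eq_bigr => i _.
rewrite -!big_split; apply: eq_bigr => j _.
rewrite -!big_split; apply: eq_bigr => k _.
rewrite !mxE /=; ring.
Qed.
End Alg2.

Section Map.
Local Notation mp := (map_mx Kemb).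
Lemma T_map c (x y z : 'rV[K]_4) :
  T (cbar c) (mp x) (mp y) (mp z) = Kemb (T c x y z).
Proof.
rewrite /T rmorph_sum; apply: eq_bigr => i _.
rewrite rmorph_sum; apply: eq_bigr => j _.
rewrite rmorph_sum; apply: eq_bigr => k _.
by rewrite !rmorphM !mxE.
Qed.
Lemma ev_map c x : ev (cbar c) (mp x) = Kemb (ev c x).
Proof. by rewrite !evT T_map. Qed.
Lemma D_map c x y : D (cbar c) (mp x) (mp y) = Kemb (D c x y).
Proof. by rewrite /D !T_map !rmorphD. Qed.
Lemma E_map c x y z : E (cbar c) (mp x) (mp y) (mp z) = Kemb (E c x y z).
Proof. by rewrite /E !T_map !rmorphD. Qed.
End Map.

Section Mat.
Variable F : fieldType.
Implicit Types (u v w x y : 'rV[F]_4).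

Definition mk2 u v : 'M[F]_(2,4) :=
  \matrix_(i < 2, j < 4) (if (i : nat) == 0%N then u 0 j else v 0 j).

Lemma mk2_r0 u v : row 0 (mk2 u v) = u.
Proof. by apply/rowP => j; rewrite !mxE. Qed.
Lemma mk2_r1 u v : row 1 (mk2 u v) = v.
Proof. by apply/rowP => j; rewrite !mxE. Qed.

Lemma mk2_rows (A : 'M[F]_(2,4)) : A = mk2 (row 0 A) (row 1 A).
Proof.
apply/matrixP => i j; rewrite !mxE; case: i => [[|[|//]] Hi] /=.
  by congr (A _ j); apply: val_inj.
by congr (A _ j); apply: val_inj.
Qed.

Lemma mulmx_mk2 (w : 'rV[F]_2) u v : w *m mk2 u v = w 0 0 *: u + w 0 1 *: v.
Proof.
rewrite mulmx_sum_row big_ord_recl big_ord1.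
congr (_ *: _ + _ *: _). all: try (apply/rowP => j; rewrite !mxE //). by congr (w 0 _); apply: val_inj.
Qed.

Lemma mk2_sub y u v : (y <= mk2 u v)%MS -> exists s t, y = s *: u + t *: v.
Proof. by case/submxP => W ->; rewrite mulmx_mk2; eauto. Qed.

Lemma sub_mk2 s t u v : ((s *: u + t *: v)%R <= mk2 u v)%MS.
Proof.
apply: addmx_sub; apply: scalemx_sub.
  by rewrite -{1}(mk2_r0 u v) row_sub.
by rewrite -{1}(mk2_r1 u v) row_sub.
Qed.

Definition indep2 u v := forall a b, a *: u + b *: v = 0 -> a = 0 /\ b = 0.

Lemma row_free_of m (A : 'M[F]_(m,4)) :
  (forall w : 'rV_m, w *m A = 0 -> w = 0) -> row_free A.
Proof.
move=> H; rewrite -kermx_eq0; apply/rowV0P => v /sub_kermxP; exact: H.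
Qed.

Lemma indep2_rank u v : indep2 u v <-> \rank (mk2 u v) = 2%N.
Proof.
split.
  move=> H; apply/eqP; apply: row_free_of => w; rewrite mulmx_mk2 => /H [h0 h1].
  apply/rowP => j; rewrite mxE; case: j => [[|[|//]] Hj].
    by rewrite -h0; congr (w 0 _); apply: val_inj.
  by rewrite -h1; congr (w 0 _); apply: val_inj.
move=> /eqP Hr a b Hab.
have := row_free_inj Hr (x1 := \row_(j < 2) (if (j : nat) == 0%N then a else b)) (x2 := 0).
rewrite mul0mx mulmx_mk2 !mxE /= => /(_ Hab) /rowP H.
by split; [have := H 0 | have := H 1]; rewrite !mxE.
Qed.
End Mat.

Section Mat4.
Variable F : fieldType.
Implicit Types (u v w x y : 'rV[F]_4).

Definition mk4 u0 u1 u2 u3 : 'M[F]_4 :=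
  \matrix_(i < 4, j < 4) (if (i : nat) == 0%N then u0 0 j else
     if (i : nat) == 1%N then u1 0 j else if (i : nat) == 2%N then u2 0 j else u3 0 j).

Lemma mulmx_mk4 (w : 'rV[F]_4) u0 u1 u2 u3 : w *m mk4 u0 u1 u2 u3 =
  w 0 (inord 0) *: u0 + w 0 (inord 1) *: u1 + w 0 (inord 2) *: u2 + w 0 (inord 3) *: u3.
Proof.
rewrite mulmx_sum_row !big_ord_recl big_ord0 addr0 !addrA.
congr (_ *: _ + _ *: _ + _ *: _ + _ *: _);
  try (apply/rowP => j; rewrite !mxE //);
  by congr (w 0 _); apply: val_inj; rewrite /= inordK.
Qed.

Definition indep4 u0 u1 u2 u3 := forall a b c d,
  a *: u0 + b *: u1 + c *: u2 + d *: u3 = 0 -> [/\ a = 0, b = 0, c = 0 & d = 0].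

Lemma span4 u0 u1 u2 u3 : indep4 u0 u1 u2 u3 ->
  forall x, exists a b c d, x = a *: u0 + b *: u1 + c *: u2 + d *: u3.
Proof.
move=> H x.
have Hf : row_free (mk4 u0 u1 u2 u3).
  apply: row_free_of => w; rewrite mulmx_mk4 => /H [h0 h1 h2 h3].
  apply/rowP => j; rewrite mxE.
  case: j => [[|[|[|[|//]]]] Hj].
  - by rewrite -h0; congr (w 0 _); apply: val_inj; rewrite /= inordK.
  - by rewrite -h1; congr (w 0 _); apply: val_inj; rewrite /= inordK.
  - by rewrite -h2; congr (w 0 _); apply: val_inj; rewrite /= inordK.
  - by rewrite -h3; congr (w 0 _); apply: val_inj; rewrite /= inordK.
move: Hf; rewrite row_free_unit => Hu.
rewrite -(mulmxKV Hu x) mulmx_mk4; eauto.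
Qed.

Lemma indep4_of u0 u1 v0 v1 (L1 L2 : 'M[F]_(2,4)) :
  indep2 u0 u1 -> indep2 v0 v1 ->
  (u0 <= L1)%MS -> (u1 <= L1)%MS -> (v0 <= L2)%MS -> (v1 <= L2)%MS ->
  (forall y, (y <= L1)%MS -> (y <= L2)%MS -> y = 0) ->
  indep4 u0 u1 v0 v1.
Proof.
move=> H1 H2 s0 s1 s2 s3 Hc a b c d Habcd.
have HP : a *: u0 + b *: u1 = - (c *: v0 + d *: v1).
  by apply/eqP; rewrite -subr_eq0 opprK addrA Habcd.
have HP0 : a *: u0 + b *: u1 = 0.
  apply: Hc; first by apply: addmx_sub; apply: scalemx_sub.
  rewrite HP (eqmx_opp (c *: v0 + d *: v1)); apply: addmx_sub; exact: scalemx_sub.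
have [ha hb] := H1 _ _ HP0.
have HQ0 : c *: v0 + d *: v1 = 0.
  by apply: oppr_inj; rewrite -HP HP0 oppr0.
by have [hc hd] := H2 _ _ HQ0.
Qed.
End Mat4.

Lemma F3 : (1 + 1 + 1 : K) = 0. Proof. by apply/eqP. Qed.
Lemma F3x (x : K) : x + x + x = 0.
Proof. by rewrite -{1 2 3}[x]mul1r -!mulrDl F3 mul0r. Qed.

Local Notation mp := (map_mx Kemb).

Ltac vec := apply/rowP => ?; rewrite !mxE ?rmorphD ?rmorphM ?rmorphN ?rmorph0 ?rmorph1; ring.

Lemma map_mk2 (u v : 'rV[K]_4) : mp (mk2 u v) = mk2 (mp u) (mp v).
Proof. by apply/matrixP => i j; rewrite !mxE; case: ifP. Qed.

Lemma onL c (L : 'M[K]_(2,4)) x : line_on_S c (bcK L) -> (x <= L)%MS -> ev c x = 0.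
Proof.
move=> H sx; have := H (mp x); rewrite map_submx ev_map => /(_ sx) /eqP.
by rewrite fmorph_eq0 => /eqP.
Qed.

Lemma line_facts c (L : 'M[K]_(2,4)) u v : line_on_S c (bcK L) ->
  (u <= L)%MS -> (v <= L)%MS ->
  [/\ ev c u = 0, ev c v = 0, D c u v = 0 & D c v u = 0].
Proof.
move=> H su sv.
have s1 : ((1 *: u + 1 *: v)%R <= L)%MS by apply: addmx_sub; apply: scalemx_sub.
have s2 : ((1 *: u + (-1) *: v)%R <= L)%MS by apply: addmx_sub; apply: scalemx_sub.
have eu := onL H su; have ev' := onL H sv.
have := onL H s1; have := onL H s2; rewrite !ev2 eu ev' => h2 h1.
have h3 : D c v u + D c v u = 0.
  move: h1 h2; set A := D c u v; set B := D c v u => h1 h2.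
  have -> : B + B = (1 ^+ 3 * 0 + 1 ^+ 2 * 1 * A + 1 * 1 ^+ 2 * B + 1 ^+ 3 * 0) +
     (1 ^+ 3 * 0 + 1 ^+ 2 * -1 * A + 1 * (-1) ^+ 2 * B + (-1) ^+ 3 * 0) by ring.
  by rewrite h1 h2 addr0.
have h4 : D c v u = 0.
  have := F3x (D c v u); rewrite h3 add0r => ->; done.
split => //; move: h1; rewrite h4 => h1; rewrite -{}h1; ring.
Qed.

Lemma cap0 (l1 l2 : 'M[K]_(2,4)) : skew_lines (bcK l1) (bcK l2) ->
  forall y : 'rV[K]_4, (y <= l1)%MS -> (y <= l2)%MS -> y = 0.
Proof.
move=> /andP [H _] y s1 s2.
have H1 : (mp y <= (bcK l1 :&: bcK l2))%MS by rewrite sub_capmx !map_submx s1 s2.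
have := submx_trans H1 H; rewrite eqmx0 submx0 map_mx_eq0 => /eqP //.
Qed.

Lemma line_indep (L : 'M[K]_(2,4)) : is_line L -> indep2 (row 0 L) (row 1 L).
Proof. by move=> H; apply/indep2_rank; rewrite -mk2_rows. Qed.

Lemma ext_basis (L : 'M[K]_(2,4)) p : is_line L -> (p <= L)%MS -> p != 0 ->
  exists p', (p' <= L)%MS /\ indep2 p p'.
Proof.
move=> HL sp np; have Hi := line_indep HL.
move: sp; rewrite {1}(mk2_rows L) => /mk2_sub [s [t Ep]].
have [t0|tn0] := eqVneq t 0.
- exists (row 1 L); split; first exact: row_sub.
  have s0 : s != 0.
    apply: contraNneq np => s0; rewrite Ep s0 t0 !scale0r addr0 //.
  move=> al be H.
  have : (al * s) *: row 0 L + (al * t + be) *: row 1 L = 0.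
    by rewrite -H Ep; vec.
  move=> /Hi [h1 h2]; move: h1 => /eqP; rewrite mulf_eq0 (negbTE s0) orbF => /eqP a0.
  by move: h2; rewrite a0 t0 mul0r add0r.
- exists (row 0 L); split; first exact: row_sub.
  move=> al be H.
  have : (al * s + be) *: row 0 L + (al * t) *: row 1 L = 0.
    by rewrite -H Ep; vec.
  move=> /Hi [h1 h2]; move: h2 => /eqP; rewrite mulf_eq0 (negbTE tn0) orbF => /eqP a0.
  by move: h1; rewrite a0 mul0r add0r.
Qed.

Lemma sing_basis c p p' q q' (y : 'rV[Kbar]_4) : smooth_cubic c ->
  indep4 p p' q q' -> y != 0 -> ev (cbar c) y = 0 ->
  D (cbar c) y (mp p) = 0 -> D (cbar c) y (mp p') = 0 ->
  D (cbar c) y (mp q) = 0 -> D (cbar c) y (mp q') = 0 -> False.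
Proof.
move=> Hs Hi ny ey h1 h2 h3 h4; apply: (Hs y ny); split => // l.
rewrite -D_delta -(map_delta_mx Kemb).
have [a [b [c' [d ->]]]] := span4 Hi (delta_mx 0 l).
by rewrite !map_mxD !map_mxZ !DD2 !DZ2 h1 h2 h3 h4 !mulr0 !addr0.
Qed.


Lemma quad_root (al be ga : Kbar) : exists s t,
  ((s != 0) || (t != 0)) /\ al * s ^+ 2 + be * s * t + ga * t ^+ 2 = 0.
Proof.
have [a0|an0] := eqVneq al 0.
  exists 1, 0. split. rewrite oner_neq0 //. rewrite a0; ring.
have [x hx] := @solve_monicpoly Kbar 2 (fun i => if i == 0%N then - ga / al else - be / al) isT.
exists x, 1. rewrite oner_neq0 orbT; split; first by [].
move: hx. rewrite !big_ord_recl big_ord0 addr0.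
rewrite (_ : ((@nat_of_ord 2 ord0) == 0%N) = true); last by [].
rewrite (_ : ((@nat_of_ord 2 (lift ord0 ord0)) == 0%N) = false); last by [].
rewrite (_ : (@nat_of_ord 2 (lift ord0 ord0)) = 1%N); last by [].
rewrite (_ : (@nat_of_ord 2 ord0) = 0%N); last by [].
rewrite expr0 mulr1 expr1 => ->.
have -> : al * (- ga / al + - be / al * x) = (al / al) * (- ga - be * x) by ring.
rewrite (divff an0); ring.
Qed.

Lemma side c (l1 l2 : 'M[K]_(2,4)) (p p' q q' : 'rV[K]_4) :
  smooth_cubic c -> is_line l1 -> line_on_S c (bcK l1) ->
  (forall P, Kpoint_of l1 P -> ~ eckardt c P) ->
  (p <= l1)%MS -> (p' <= l1)%MS -> (q <= l2)%MS -> p != 0 -> q != 0 ->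
  indep4 p p' q q' ->
  (forall y : 'rV[K]_4, (y <= l1)%MS -> (y <= l2)%MS -> y = 0) ->
  ev c q = 0 -> D c p q = 0 -> D c q p = 0 ->
  (exists A, Kpoint_of l1 A /\ third_point c A A (p + q)) \/
  E c p p' q + D c q p' = 0.
Proof.
move=> Hs Hl HS Heck sp sp' sq np nq Hi Hc evq Dpq Dqp.
have [evp evp' Dpp' Dp'p] := line_facts HS sp sp'.
have m1 : ev (cbar c) (mp p) = 0 by rewrite ev_map evp rmorph0.
have m2 : ev (cbar c) (mp p') = 0 by rewrite ev_map evp' rmorph0.
have m3 : ev (cbar c) (mp q) = 0 by rewrite ev_map evq rmorph0.
have m4 : D (cbar c) (mp p) (mp p') = 0 by rewrite D_map Dpp' rmorph0.
have m5 : D (cbar c) (mp p') (mp p) = 0 by rewrite D_map Dp'p rmorph0.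
have m6 : D (cbar c) (mp p) (mp q) = 0 by rewrite D_map Dpq rmorph0.
have m7 : D (cbar c) (mp q) (mp p) = 0 by rewrite D_map Dqp rmorph0.
have PK := plane evp evp' evq Dpp' Dp'p Dpq Dqp.
have PB := plane m1 m2 m3 m4 m5 m6 m7.
rewrite !E_map !D_map in PB.
have [a Ea] : exists a, E c p p' q = a by eexists.
have [b Eb] : exists b, D c p' q = b by eexists.
have [e Ee] : exists e, D c q p' = e by eexists.
rewrite Ea Eb Ee in PK PB; rewrite Ea Ee.
have ipp' : indep2 p p'.
  move=> al be H; have [] := Hi al be 0 0; last by [].
  by rewrite !scale0r !addr0.
have ipq : indep2 p q.
  move=> al be H; have [] := Hi al 0 be 0; last by [].
  by rewrite !scale0r addr0 addr0.
have ipqB : indep2 (mp p) (mp q).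
  by apply/indep2_rank; rewrite -map_mk2 mxrank_map; apply/indep2_rank.
have ipp'B : indep2 (mp p) (mp p').
  by apply/indep2_rank; rewrite -map_mk2 mxrank_map; apply/indep2_rank.
have [a0|an0] := eqVneq a 0; last first.
  have [ae0|aen0] := eqVneq (a + e) 0; first by right.
  left.
  have [A EA] : exists A, A = b *: p + (- a) *: p' by eexists.
  exists A; split.
    split.
      apply/eqP => A0; have := ipp' b (- a); rewrite -EA A0 => /(_ erefl) [_ /eqP].
      by rewrite oppr_eq0 (negbTE an0).
    by rewrite EA; apply: addmx_sub; apply: scalemx_sub.
  exists (mk2 (p + q) A); split.
    apply/indep2_rank => al be H.
    have Hv : (al + be * b) *: p + (- (be * a)) *: p' + al *: q + 0 *: q' = 0.
      by rewrite -H EA; vec.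
    have [h1 h2 h3 _] := Hi _ _ _ _ Hv.
    split => //; move: h2 => /eqP; rewrite oppr_eq0 mulf_eq0 (negbTE an0) orbF => /eqP //.
  split.
    move=> H; have := H (mp (p + q + A)).
    rewrite map_mk2 -map_mk2 map_submx.
    have := sub_mk2 1 1 (p + q) A; rewrite !scale1r => -> /(_ isT).
    rewrite ev_map (_ : p + q + A = (1 + b) *: p + (- a) *: p' + 1 *: q); last by rewrite EA; vec.
    rewrite PK => /eqP; rewrite fmorph_eq0 => /eqP H0.
    have : a * (a + e) = 0 by rewrite -[RHS]oppr0 -H0; ring.
    by move/eqP; rewrite mulf_eq0 (negbTE an0) (negbTE aen0).
  exists 0, 1, 0, 1, 1, 0, (Kemb (a * (a + e))).
  rewrite mk2_r0 mk2_r1; split.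
  - by rewrite scale0r add0r scale1r.
  - by rewrite scale0r add0r scale1r.
  - by rewrite scale0r addr0 scale1r.
  - by rewrite fmorph_eq0 mulf_neq0.
  move=> s t.
  rewrite (_ : s *: mp (p + q) + t *: mp A =
     (s + t * Kemb b) *: mp p + (- (t * Kemb a)) *: mp p' + s *: mp q); last first.
    by rewrite EA; vec.
  rewrite PB !rmorph0 !rmorph1 rmorphM rmorphD; ring.
exfalso.
have [b0|bn0] := eqVneq b 0.
  have [s [s' [nz Hq]]] := quad_root (Kemb (D c p q')) (Kemb (E c p p' q')) (Kemb (D c p' q')).
  apply: (sing_basis (y := s *: mp p + s' *: mp p') Hs Hi).
  - apply/eqP => y0; have [h1 h2] := ipp'B s s' y0.
    by move: nz; rewrite h1 h2 eqxx.
  - rewrite ev2 m1 m2 m4 m5; ring.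
  - rewrite Dq !D_map !E_map Dxx Exyx evp Dpp' Dp'p !rmorph0; ring.
  - rewrite Dq !D_map !E_map Dxx Exyy evp' Dpp' Dp'p !rmorph0; ring.
  - rewrite Dq !D_map !E_map Dpq Ea Eb a0 b0 !rmorph0; ring.
  - rewrite Dq !D_map !E_map -Hq; ring.
have [e0|en0] := eqVneq e 0.
  have [s [t [nz Hq]]] := quad_root (Kemb (D c p q')) (Kemb (E c p q q')) (Kemb (D c q q')).
  apply: (sing_basis (y := s *: mp p + t *: mp q) Hs Hi).
  - apply/eqP => y0; have [h1 h2] := ipqB s t y0.
    by move: nz; rewrite h1 h2 eqxx.
  - rewrite ev2 m1 m3 m6 m7; ring.
  - rewrite Dq !D_map !E_map Dxx Exyx evp Dpq Dqp !rmorph0; ring.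
  - rewrite Dq !D_map !E_map E23 Ea Ee a0 e0 Dpp' !rmorph0; ring.
  - rewrite Dq !D_map !E_map Dxx Exyy evq Dpq Dqp !rmorph0; ring.
  - rewrite Dq !D_map !E_map -Hq; ring.
have [n En] : exists n, n = e *: p' + (- b) *: q by eexists.
apply: (Heck p); first by split.
split; first by split.
exists (bcK l1), (mp (mk2 p q)), (mp (mk2 p n)); split.
- split; rewrite /is_line /bcK mxrank_map //.
    by apply/indep2_rank.
  apply/indep2_rank => al be H.
  have Hv : al *: p + (be * e) *: p' + (- (be * b)) *: q + 0 *: q' = 0.
    by rewrite -H En; vec.
  have [h1 h2 _ _] := Hi _ _ _ _ Hv.
  split => //; move: h2 => /eqP; rewrite mulf_eq0 (negbTE en0) orbF => /eqP //.
- split => //.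
    move=> y; rewrite map_mk2 => /mk2_sub [s [t ->]].
    rewrite ev2 m1 m3 m6 m7; ring.
  move=> y; rewrite map_mk2 => /mk2_sub [s [t ->]].
  rewrite (_ : s *: mp p + t *: mp n =
     s *: mp p + (t * Kemb e) *: mp p' + (- (t * Kemb b)) *: mp q); last first.
    by rewrite En; vec.
  rewrite PB a0 rmorph0; ring.
- split; rewrite /bcK map_submx //.
    by rewrite -{1}(mk2_r0 p q) row_sub.
  by rewrite -{1}(mk2_r0 p n) row_sub.
- split.
  + apply/negP => /andP [_ H].
    have H1 : (mp q <= mp (mk2 p q))%MS by rewrite map_submx -{1}(mk2_r1 p q) row_sub.
    have := submx_trans H1 H; rewrite /bcK map_submx => ql1.
    by move: nq; rewrite (Hc q ql1 sq) eqxx.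
  + apply/negP => /andP [_ H].
    have H1 : (mp n <= mp (mk2 p n))%MS by rewrite map_submx -{1}(mk2_r1 p n) row_sub.
    have := submx_trans H1 H; rewrite /bcK map_submx => nl1.
    have H2 : (- b) *: q = n + (- e) *: p' by rewrite En; vec.
    have H3 : (- b) *: q = 0.
      apply: Hc; last exact: scalemx_sub.
      by rewrite H2; apply: addmx_sub => //; exact: scalemx_sub.
    move: H3 => /eqP; rewrite scaler_eq0 oppr_eq0 (negbTE bn0) (negbTE nq) //.
  + apply/negP => /andP [_ H].
    have H1 : (mp n <= mp (mk2 p q))%MS.
      apply: submx_trans H; by rewrite map_submx -{1}(mk2_r1 p n) row_sub.
    move: H1; rewrite map_submx => /mk2_sub [s [t Hn]].
    have Hv : (- s) *: p + e *: p' + (- b - t) *: q + 0 *: q' = 0.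
      transitivity (n - (s *: p + t *: q)); first by rewrite En; vec.
      by rewrite -Hn subrr.
    have [_ h2 _ _] := Hi _ _ _ _ Hv.
    by move: en0; rewrite h2 eqxx.
Qed.

Unset Implicit Arguments.

Theorem mainTheorem15 (c : cubic K) (l1 l2 : 'M[K]_(2, 4)) :
  smooth_cubic c ->
  is_line l1 -> is_line l2 ->
  line_on_S c (bcK l1) -> line_on_S c (bcK l2) ->
  skew_lines (bcK l1) (bcK l2) ->
  (forall P, Kpoint_of l1 P -> ~ eckardt c P) ->
  (forall P, Kpoint_of l2 P -> ~ eckardt c P) ->
  forall x : 'rV[K]_4, onS c x <->
    Span c (fun y => Kpoint_of l1 y \/ Kpoint_of l2 y) x.
Proof.
move=> Hs Hl1 Hl2 HS1 HS2 Hsk Heck1 Heck2 x; split; last first.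
  case=> [[|n]] /=; last by case.
  by case=> [[nx sx]|[nx sx]]; split => //; [exact: onL HS1 sx | exact: onL HS2 sx].
move=> [nx evx].
have Hc := cap0 Hsk.
have Hc' : forall y : 'rV[K]_4, (y <= l2)%MS -> (y <= l1)%MS -> y = 0.
  by move=> y s2 s1; exact: Hc.
have i1 := line_indep Hl1; have i2 := line_indep Hl2.
have I4 := indep4_of i1 i2 (row_sub 0 l1) (row_sub 1 l1) (row_sub 0 l2) (row_sub 1 l2) Hc.
have [z0 [z1 [z2 [z3 Ex]]]] := span4 I4 x.
have [p Ep] : exists p, p = z0 *: row 0 l1 + z1 *: row 1 l1 by eexists.
have [q Eq] : exists q, q = z2 *: row 0 l2 + z3 *: row 1 l2 by eexists.
have sp : (p <= l1)%MS by rewrite Ep; apply: addmx_sub; apply: scalemx_sub; exact: row_sub.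
have sq : (q <= l2)%MS by rewrite Eq; apply: addmx_sub; apply: scalemx_sub; exact: row_sub.
have Exq : x = p + q by rewrite Ex Ep Eq !addrA.
have [q0|nq] := eqVneq q 0.
  by exists 0%N; left; split => //; rewrite Exq q0 addr0.
have [p0|np] := eqVneq p 0.
  by exists 0%N; right; split => //; rewrite Exq p0 add0r.
have [p' [sp' ipp']] := ext_basis Hl1 sp np.
have [q' [sq' iqq']] := ext_basis Hl2 sq nq.
have I := indep4_of ipp' iqq' sp sp' sq sq' Hc.
have I' := indep4_of iqq' ipp' sq sq' sp sp' Hc'.
have [evp _ Dpp' _] := line_facts HS1 sp sp'.
have [evq _ Dqq' _] := line_facts HS2 sq sq'.
have hx : D c q p = - D c p q.
  move: evx; rewrite Exq (addZ1 p q) ev2 evp evq => h.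
  by apply/eqP; rewrite -subr_eq0 opprK -h; apply/eqP; ring.
exists 1%N; split; first by split.
right.
have [b0|bn0] := eqVneq (D c p q) 0.
  have Dqp0 : D c q p = 0 by rewrite hx b0 oppr0.
  case: (side Hs Hl1 HS1 Heck1 sp sp' sq np nq I Hc evq b0 Dqp0) => [[A [HA HT]]|r1].
    by exists A, A; split; [left|split; [left|rewrite Exq]].
  case: (side Hs Hl2 HS2 Heck2 sq sq' sp nq np I' Hc' evp Dqp0 b0) => [[A [HA HT]]|r2].
    by exists A, A; split; [right|split; [right|rewrite Exq addrC]].
  exfalso.
  have evx' : ev (cbar c) (mp x) = 0 by rewrite ev_map evx rmorph0.
  have nx' : mp x != 0 by rewrite map_mx_eq0.
  apply: (sing_basis Hs I nx' evx').
  - rewrite D_map (_ : D c x p = 0) ?rmorph0 //.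
    rewrite Exq (addZ1 p q) Dq Dxx Exyx evp b0 Dqp0; ring.
  - rewrite D_map (_ : D c x p' = 0) ?rmorph0 //.
    rewrite Exq (addZ1 p q) Dq Dpp' E23 -[RHS]r1; ring.
  - rewrite D_map (_ : D c x q = 0) ?rmorph0 //.
    rewrite Exq (addZ1 p q) Dq Dxx Exyy evq b0 Dqp0; ring.
  - rewrite D_map (_ : D c x q' = 0) ?rmorph0 //.
    rewrite Exq (addZ1 p q) Dq Dqq' E12 E23 -[RHS]r2; ring.
exists p, q; split; first by left.
split; first by right.
have ipq : indep2 p q.
  move=> al be H.
  have Hv : al *: p + 0 *: p' + be *: q + 0 *: q' = 0 by rewrite !scale0r addr0 addr0.
  by have [] := I _ _ _ _ Hv.
exists (mk2 p q); split; first by apply/indep2_rank.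
split.
  move=> H; have := H (mp (1 *: p + (-1) *: q)).
  rewrite map_mk2 -map_mk2 map_submx sub_mk2 => /(_ isT).
  rewrite ev_map ev2 evp evq hx => /eqP; rewrite fmorph_eq0 => /eqP H0.
  have H1 : D c p q + D c p q = 0 by rewrite -[RHS]oppr0 -H0; ring.
  by move: bn0; have := F3x (D c p q); rewrite H1 add0r => ->; rewrite eqxx.
exists 1, 0, 0, 1, 1, 1, (Kemb (- D c p q)).
rewrite mk2_r0 mk2_r1; split.
- by rewrite scale0r addr0 scale1r.
- by rewrite scale0r add0r scale1r.
- by rewrite !scale1r.
- by rewrite fmorph_eq0 oppr_eq0.
move=> s t; rewrite ev2 !ev_map !D_map evp evq hx !rmorph0 !rmorph1 rmorphN; ring.
Qed.
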